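(* Let $V\in(\mathbb{R}\cup\{-\infty\})^{n\times p}$ have no row and no column identically equal to $-\infty$, and let $T=T_V:(\mathbb{R}\cup\{-\infty\})^n\to(\mathbb{R}\cup\{-\infty\})^n$ be the operator $$T_i(x)=\inf_{k\in[p],\,(i,k)\in E}\Big[-V_{ik}+\max_{j\in[n],\,j\neq i}(V_{jk}+x_j)\Big],\qquad i\in[n],$$ where $E=\{(i,k)\in[n]\times[p]: V_{ik}\neq-\infty\}$. Then $\rho(T)\le 0$ and $$-\rho(T)=\operatorname{inrad}(\operatorname{Col}(V)).$$ Moreover, if $\rho(T)$ is finite, then for any vector $a\in\mathbb{R}^n$ such that $T(a)\le \rho(T)+a$, the Hilbert ball $B(-a,-\rho(T))$ is included in $\operatorname{Col}(V)\cap\mathbb{R}^n$ and has maximal radius among Hilbert balls centered at a point of $\mathbb{R}^n$ and included in $\operatorname{Col}(V)$.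
   Context: Write $\mathbb{R}_{\max}=\mathbb{R}\cup\{-\infty\}$, with conventions $-\infty+c=-\infty$ for $c\in\mathbb{R}_{\max}$ and the maximum of an empty family equal to $-\infty$; $\bot$ denotes the identically $-\infty$ vector, and $\lambda+x$ denotes the vector $(\lambda+x_i)_i$. For a matrix $V$, $\operatorname{Col}(V)=\{Vx: x\in\mathbb{R}_{\max}^p\}$ with $(Vx)_i=\max_{k}(V_{ik}+x_k)$ (the tropical column span). Hilbert's projective metric on $\mathbb{R}_{\max}^n$: for $x,y$ not both $\bot$, $d(x,y)=\inf\{\lambda-\mu:\lambda,\mu\in\mathbb{R},\ \mu+y_i\le x_i\le\lambda+y_i\ \forall i\}\in[0,+\infty]$, and $d(\bot,\bot)=0$. For $a\in\mathbb{R}^n$ and $r\in[0,+\infty]$, $B(a,r)=\{x\in\mathbb{R}_{\max}^n: d(a,x)\le r\}$. The inner radius $\operatorname{inrad}(\mathcal{C})$ of a set $\mathcal{C}\subset\mathbb{R}_{\max}^n$ is the supremum of the radii $r$ of Hilbert balls $B(a,r)$ with $a\in\mathbb{R}^n$ included in the tropical cone generated by $\mathcal C$ (for $\mathcal C=\operatorname{Col}(V)$, included in $\operatorname{Col}(V)$). For an order-preserving, continuous map $T:\mathbb{R}_{\max}^n\to\mathbb{R}_{\max}^n$ commuting with addition of constants, $\rho(T)=\sup\{\lambda\in\mathbb{R}\cup\{-\infty\}: \exists u\in\mathbb{R}_{\max}^n,\ u\neq\bot,\ T(u)=\lambda+u\}$. *)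

(* Defs.v *)
From HB Require Import structures.
From mathcomp Require Import all_boot all_order all_algebra.
From mathcomp Require Import all_classical all_reals.
From mathcomp Require Import ereal.
Set Implicit Arguments. Unset Strict Implicit. Unset Printing Implicit Defensive.
Import Order.TTheory GRing.Theory Num.Theory.
Local Open Scope classical_set_scope.
Local Open Scope ereal_scope.

(* R_max = R ∪ {-oo} is modelled inside \bar R as the elements different
   from +oo.  A vector of R_max^n is a map 'I_n -> \bar R with no +oo entry. *)
Section TropDefs.
Variable R : realType.

Definition rmax_vec (n : nat) (x : 'I_n -> \bar R) : Prop :=
  forall i, x i != +oo.

Definition botv (n : nat) : 'I_n -> \bar R := fun _ => -oo.

Definition fin_vecs (n : nat) : set ('I_n -> \bar R) :=
  [set x | forall i, x i \is a fin_num].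

Definition embv (n : nat) (a : 'I_n -> R) : 'I_n -> \bar R :=
  fun i => (a i)%:E.

Definition tmulv (n p : nat) (V : 'I_n -> 'I_p -> \bar R) (x : 'I_p -> \bar R)
  : 'I_n -> \bar R :=
  fun i => \big[maxe/-oo]_(k < p) (V i k + x k).

Definition colspan (n p : nat) (V : 'I_n -> 'I_p -> \bar R)
  : set ('I_n -> \bar R) :=
  [set y | exists x : 'I_p -> \bar R, rmax_vec x /\ y = tmulv V x].

Definition T_op (n p : nat) (V : 'I_n -> 'I_p -> \bar R) (x : 'I_n -> \bar R)
  : 'I_n -> \bar R :=
  fun i => ereal_inf
    [set (- V i k + \big[maxe/-oo]_(j < n | j != i) (V j k + x j))
       | k in [set k : 'I_p | V i k != -oo]].

(* Hilbert's projective metric (inf of the empty set is +oo) *)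
Definition hilbert_d (n : nat) (x y : 'I_n -> \bar R) : \bar R :=
  if `[< x = @botv n /\ y = @botv n >] then 0
  else ereal_inf [set e : \bar R | exists l m : R, e = (l - m)%:E /\
          forall i, m%:E + y i <= x i /\ x i <= l%:E + y i].

Definition hball (n : nat) (a : 'I_n -> R) (r : \bar R) : set ('I_n -> \bar R) :=
  [set x | rmax_vec x /\ hilbert_d (embv a) x <= r].

Definition inrad_col (n p : nat) (V : 'I_n -> 'I_p -> \bar R) : \bar R :=
  ereal_sup [set r : \bar R | 0 <= r /\
     exists a : 'I_n -> R, hball a r `<=` colspan V].

Definition rho (n : nat) (T : ('I_n -> \bar R) -> ('I_n -> \bar R)) : \bar R :=
  ereal_sup [set l : \bar R | l != +oo /\
     exists u : 'I_n -> \bar R, rmax_vec u /\ u <> @botv n /\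
       T u = (fun i => l + u i)].

End TropDefs.

(* Main.v *)
Require Import Defs.
From HB Require Import structures.
From mathcomp Require Import all_boot all_order all_algebra.
From mathcomp Require Import all_classical all_reals.
From mathcomp Require Import ereal.
Import Order.TTheory GRing.Theory Num.Theory.
Local Open Scope classical_set_scope.
Local Open Scope ereal_scope.
Set Implicit Arguments. Unset Strict Implicit. Unset Printing Implicit Defensive.
From mathcomp Require Import lra.
Section Gen.
Variable R : realType.

Lemma argmin_ex (d : Order.disp_t) (T : orderType d) (I : finType) (P : pred I) (f : I -> T) i1 :
  P i1 -> exists2 i0, P i0 & forall i, P i -> (f i0 <= f i)%O.
Proof.
move=> Pi1; case: (@arg_minP _ T I i1 P f Pi1) => i0 Pi0 H.
by exists i0.
Qed.

Lemma argmax_ex (d : Order.disp_t) (T : orderType d) (I : finType) (P : pred I) (f : I -> T) i1 :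
  P i1 -> exists2 i0, P i0 & forall i, P i -> (f i <= f i0)%O.
Proof.
move=> Pi1; case: (@arg_maxP _ T I i1 P f Pi1) => i0 Pi0 H.
by exists i0.
Qed.

End Gen.
Section Gen2.
Variable R : realType.
Lemma bigmaxe_addl (I : finType) (P : pred I) (f : I -> \bar R) (c : R) :
  \big[maxe/-oo]_(j | P j) (c%:E + f j) = c%:E + \big[maxe/-oo]_(j | P j) f j.
Proof.
elim/big_rec2: _ => [|j a b Pj ->]; first by rewrite addeNy.
by rewrite adde_maxr.
Qed.

Lemma bigmaxe_neqy (I : finType) (P : pred I) (f : I -> \bar R) :
  (forall j, P j -> f j != +oo) -> \big[maxe/-oo]_(j | P j) f j != +oo.
Proof.
move=> H; elim/big_ind: _ => //.
  by move=> a b Ha Hb; rewrite maxElt; case: ifP.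
Qed.

End Gen2.

Section Lin.
Variable R : realType.
Variable n : nat.
Local Open Scope ring_scope.

Lemma lin_att (m : nat) : forall (S : {set 'I_n}) (E : 'I_n -> 'I_n -> bool)
  (w : 'I_n -> 'I_n -> R), #|S| = m ->
  (forall eps : R, (0 < eps)%R -> exists a : 'I_n -> R,
     forall i j, i \in S -> j \in S -> E i j -> (w i j + a j <= eps + a i)%R) ->
  exists a : 'I_n -> R,
     forall i j, i \in S -> j \in S -> E i j -> (w i j + a j <= a i)%R.
Proof.
elim: m => [|m IH] S E w HS H.
  exists (fun _ => 0%R) => i j Hi; move: HS => /eqP; rewrite cards_eq0 => /eqP HS0.
  by rewrite HS0 inE in Hi.
have [i0 Hi0] : exists i0, i0 \in S.
  by apply/set0Pn; rewrite -card_gt0 HS.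
have Hw00 : E i0 i0 -> (w i0 i0 <= 0)%R.
  move=> E00; rewrite leNgt; apply/negP => Hpos.
  have [a Ha] := H (w i0 i0 / 2)%R (ltac:(lra)).
  have := Ha i0 i0 Hi0 Hi0 E00; lra.
pose S' := S :\ i0.
have HS' : #|S'| = m.
  by move: HS; rewrite (cardsD1 i0) Hi0 add1n; case.
pose E' i j := E i j || (E i i0 && E i0 j).
pose w' i j := if E i j && (E i i0 && E i0 j) then Num.max (w i j) (w i i0 + w i0 j)
   else if E i j then w i j else (w i i0 + w i0 j)%R.
have Hw1 : forall i j, E i j -> (w i j <= w' i j)%R.
  move=> i j Eij; rewrite /w' Eij /=; case: (_ && _) => //; by rewrite le_max lexx.
have Hw2 : forall i j, E i i0 -> E i0 j -> (w i i0 + w i0 j <= w' i j)%R.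
  move=> i j E1 E2; rewrite /w' E1 E2 /=; case: (E i j) => //=; by rewrite le_max lexx orbT.
have Hw3 : forall i j (c : R), E' i j -> (E i j -> w i j <= c)%R ->
    (E i i0 -> E i0 j -> w i i0 + w i0 j <= c)%R -> (w' i j <= c)%R.
  move=> i j c; rewrite /E' /w'; case: (E i j); case: (E i i0); case: (E i0 j) => //=;
  by move=> _ h1 h2; rewrite ?ge_max ?h1 ?h2.
have HS'S : forall i, i \in S' -> i \in S /\ i != i0.
  by move=> i; rewrite !inE => /andP[-> ->].
have Hyp : forall eps : R, (0 < eps)%R -> exists a : 'I_n -> R,
     forall i j, i \in S' -> j \in S' -> E' i j -> (w' i j + a j <= eps + a i)%R.
  move=> eps Heps; have [a Ha] := H (eps / 2)%R (ltac:(lra)).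
  exists a => i j Hi Hj HE.
  have [HiS _] := HS'S i Hi; have [HjS _] := HS'S j Hj.
  suff : (w' i j <= eps + a i - a j)%R by lra.
  apply: Hw3 => //.
    move=> Eij; have := Ha i j HiS HjS Eij; lra.
  move=> E1 E2; have := Ha i i0 HiS Hi0 E1; have := Ha i0 j Hi0 HjS E2; lra.
have [a' Ha'] := IH S' E' w' HS' Hyp.
pose t0 := (- \sum_(k < n) `|a' k - w k i0|)%R.
pose t := \big[Num.max/t0]_(j | (j \in S') && E i0 j) (w i0 j + a' j)%R.
have Ht1 : forall j, j \in S' -> E i0 j -> (w i0 j + a' j <= t)%R.
  move=> j Hj Ej; apply: (@bigmax_sup _ _ _ _ j); by rewrite ?Hj ?Ej.
have Ht2 : forall i, i \in S' -> E i i0 -> (w i i0 + t <= a' i)%R.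
  move=> i Hi Ei; suff : (t <= a' i - w i i0)%R by lra.
  apply: bigmax_le.
    rewrite /t0 (bigD1 i) //=.
    have h1 := ler_norm (- (a' i - w i i0)); rewrite normrN in h1.
    have h2 : (0 <= \sum_(k < n | k != i) `|a' k - w k i0|)%R by apply: sumr_ge0.
    lra.
  move=> j /andP[Hj Ej].
  have := Ha' i j Hi Hj (ltac:(by rewrite /E' Ei Ej orbT)).
  have := Hw2 i j Ei Ej; lra.
exists (fun k => if k == i0 then t else a' k) => i j Hi Hj HE /=.
have [Ei|Ni] := eqVneq i i0; have [Ej|Nj] := eqVneq j i0.
- subst; have := Hw00 HE; lra.
- subst; apply: Ht1 => //; by rewrite !inE Nj.
- subst; apply: Ht2 => //; by rewrite !inE Ni.
- have Hi' : i \in S' by rewrite !inE Ni.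
  have Hj' : j \in S' by rewrite !inE Nj.
  have := Ha' i j Hi' Hj' (ltac:(by rewrite /E' HE)).
  have := Hw1 i j HE; lra.
Qed.


Lemma pigeon_eps (I : finType) (P : I -> R -> Prop) :
  (forall i e e', (0 < e)%R -> (e <= e')%R -> P i e -> P i e') ->
  (forall e, (0 < e)%R -> exists i, P i e) ->
  exists i, forall e, (0 < e)%R -> P i e.
Proof.
move=> Hmon H; case: (pselect (exists i, forall e, (0 < e)%R -> P i e)) => // Hn.
exfalso.
have Hf : forall i, exists e, (0 < e)%R /\ ~ P i e.
  move=> i; have : ~ (forall e, (0 < e)%R -> P i e) by move=> h; apply: Hn; exists i.
  move/existsNP => [e He]; exists e.
  case: (boolP (0 < e)%R) => He0; last by exfalso; apply: He => h; rewrite h in He0.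
  by split => // HP; apply: He.
have [ef Hef] := choice Hf.
pose em := \big[Num.min/1%R]_i ef i.
have Hem : (0 < em)%R.
  apply/bigmin_gtP; split => // i _; by case: (Hef i).
have [i Hi] := H em Hem.
have [Hpos Hn'] := Hef i; apply: Hn'; apply: Hmon Hi => //; exact: bigmin_le.
Qed.

End Lin.
Section Main.
Variable R : realType.
Variables n p : nat.
Variable V : 'I_n -> 'I_p -> \bar R.
Hypothesis HV : forall i k, V i k != +oo.
Hypothesis Hrow : forall i, exists k, V i k != -oo.
Hypothesis Hcol : forall k, exists i, V i k != -oo.

Definition Fk (x : 'I_n -> \bar R) i k :=
  - V i k + \big[maxe/-oo]_(j < n | j != i) (V j k + x j).

Lemma T_le x i k : V i k != -oo -> T_op V x i <= Fk x i k.
Proof.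
move=> Hk; rewrite /T_op; apply: ereal_inf_lbound; by exists k.
Qed.

Lemma T_att x i : exists2 k, V i k != -oo & T_op V x i = Fk x i k.
Proof.
have [k1 Hk1] := Hrow i.
have [k0 Hk0 Hmin] := @argmin_ex _ _ _ (fun k => V i k != -oo) (Fk x i) k1 Hk1.
exists k0 => //; apply/eqP; rewrite eq_le T_le //=.
apply/ereal_infP => y [k Hk <-]; exact: Hmin.
Qed.


Local Notation T := (T_op V).

Lemma Fk_mono x y i k : (forall j, x j <= y j) -> Fk x i k <= Fk y i k.
Proof.
move=> Hxy; apply: leeD2l; apply/bigmax_leP; split; first exact: leNye.
move=> j Hj; apply: (@bigmax_sup _ _ _ _ j) => //; exact: leeD2l.
Qed.

Lemma T_mono x y i : (forall j, x j <= y j) -> T x i <= T y i.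
Proof.
move=> Hxy; have [k Hk ->] := T_att y i.
apply: le_trans (T_le x Hk) _; exact: Fk_mono.
Qed.

Lemma Fk_shift x i k (c : R) :
  Fk (fun j => c%:E + x j) i k = c%:E + Fk x i k.
Proof.
rewrite /Fk (eq_bigr (fun j => c%:E + (V j k + x j))); last first.
  by move=> j _; rewrite addeCA.
by rewrite bigmaxe_addl addeCA.
Qed.

Lemma T_shift x i (c : R) : T (fun j => c%:E + x j) i = c%:E + T x i.
Proof.
apply/eqP; rewrite eq_le; apply/andP; split.
  have [k Hk ->] := T_att x i; rewrite -Fk_shift; exact: T_le.
have [k Hk ->] := T_att (fun j => c%:E + x j) i; rewrite Fk_shift.
apply: leeD2l; exact: T_le.
Qed.

Lemma Fk_neqy x i k : V i k != -oo -> (forall j, x j != +oo) -> Fk x i k != +oo.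
Proof.
move=> Hk Hx; rewrite /Fk.
have : \big[maxe/-oo]_(j < n | j != i) (V j k + x j) != +oo.
  apply: bigmaxe_neqy => j _.
  move: (HV j k) (Hx j); case: (V j k) => [v||] //; case: (x j) => [xx||] //.
move: (HV i k) Hk; case: (V i k) => [v||] //= _ _.
by case: (\big[maxe/-oo]_(j < n | j != i) (V j k + x j)).
Qed.

Lemma T_neqy x i : (forall j, x j != +oo) -> T x i != +oo.
Proof.
move=> Hx; have [k Hk ->] := T_att x i; exact: Fk_neqy.
Qed.

Lemma Fk_leP x i k (v : R) (y : \bar R) : V i k = v%:E ->
  (Fk x i k <= y) <-> (forall j, j != i -> V j k + x j <= y + v%:E).
Proof.
move=> Hv; rewrite /Fk Hv addeC leeBlDr //.
split.
  move=> /bigmax_leP [_ H] j Hj; exact: H.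
move=> H; apply/bigmax_leP; split => //; exact: leNye.
Qed.

Lemma hd_le (a : 'I_n -> R) (x : 'I_n -> \bar R) (r : R) :
  (forall i, x i != +oo) -> hilbert_d (embv a) x <= r%:E ->
  exists2 x' : 'I_n -> R, x = embv x' &
    forall i j, ((x' i - a i) - (x' j - a j) <= r)%R.
Proof.
move=> Hx; rewrite /hilbert_d; case: asboolP => [[Ha _]|Hnb] Hd.
  have E : forall i : 'I_n, False.
    move=> i; have := congr1 (fun f => f i) Ha; rewrite /embv /botv /=; discriminate.
  exists (fun _ => 0%R) => [|i]; first by apply: funext => i; case: (E i).
  by case: (E i).
have Hfin : forall i, x i \is a fin_num.
  move=> i; rewrite fin_numE (Hx i) andbT; apply/negP => /eqP Hi.
  move: Hd; rewrite (_ : ereal_inf _ = +oo) //.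
  apply/ereal_inf_pinfty => e [l [m [_ H]]]; have [_ ] := H i.
  by rewrite Hi addeNy /embv leNgt ltNyr.
exists (fun i => fine (x i)).
  by apply: funext => i; rewrite /embv fineK.
move=> i j; rewrite -lee_fin; apply: le_trans Hd; apply/ereal_infP => e [l [m [-> H]]].
rewrite lee_fin.
have [H1 _] := H i; have [_ H2] := H j.
move: H1 H2; rewrite /embv -(fineK (Hfin i)) -(fineK (Hfin j)) -!EFinD !lee_fin => H1 H2.
lra.
Qed.

Lemma hd_ge (a x' : 'I_n -> R) (r : R) : (0 <= r)%R ->
  (forall i j, ((x' i - a i) - (x' j - a j) <= r)%R) ->
  hilbert_d (embv a) (embv x') <= r%:E.
Proof.
move=> r0 H; rewrite /hilbert_d; case: asboolP => [_|Hnb]; first by rewrite lee_fin.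
have [[i1 _]|Hn] := pselect (exists i : 'I_n, True); last first.
  exfalso; apply: Hnb; split; apply: funext => i; exfalso; apply: Hn; by exists i.
have [il _ Hl] := @argmax_ex _ _ _ predT (fun i => a i - x' i)%R i1 isT.
have [im _ Hm] := @argmin_ex _ _ _ predT (fun i => a i - x' i)%R i1 isT.
apply: ge_ereal_inf; exists ((a il - x' il) - (a im - x' im))%:E.
  exists (a il - x' il)%R, (a im - x' im)%R; split => // i; rewrite /embv -!EFinD !lee_fin.
  have := Hl i isT; have := Hm i isT; move=> /= h1 h2; split; lra.
rewrite lee_fin; have := H im il; lra.
Qed.

Lemma keyA (a : 'I_n -> R) (r : R) : (0 <= r)%R ->
  (forall i, T (embv a) i <= (a i - r)%:E) ->
  hball (fun i => - a i)%R r%:E `<=` colspan V `&` @fin_vecs R n.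
Proof.
move=> r0 HT x [Hx Hd].
have [x' -> Hdiff] := hd_le Hx Hd.
split; last by move=> i; rewrite /embv.
pose y k := \big[mine/+oo]_(i | V i k != -oo) ((x' i)%:E - V i k).
exists y; split.
  move=> k; have [i Hi] := Hcol k.
  have : y k <= (x' i)%:E - V i k by apply: bigmin_le_cond.
  move: (HV i k) Hi; case: (V i k) => [v||] // _ _; case: (y k) => //.
apply: funext => i; rewrite /tmulv; apply/eqP; rewrite eq_le; apply/andP; split.
- have [k Hk HTk] := T_att (embv a) i.
  move: (HT i); rewrite HTk.
  move: (HV i k) Hk; case Hv : (V i k) => [v||] // _ _.
  move/(Fk_leP _ _ Hv) => Hk.
  apply: (@bigmax_sup _ _ _ _ k) => //.
  have Hyk : ((x' i - v)%:E <= y k).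
    apply/bigmin_geP; split; first exact: leey.
    move=> i' Hi'; have [/eqP ->|Hne] := boolP (i' == i); first by rewrite Hv.
    move: (Hk i' Hne) Hi' (HV i' k) (Hdiff i i'); rewrite /embv.
    case: (V i' k) => [w||] //= + _ _; rewrite -!EFinD !lee_fin => h1 h2; lra.
  rewrite Hv; move: Hyk; case: (y k) => [c||] //=.
    rewrite !lee_fin; lra.
  by move=> _; rewrite addey // leey.
- apply/bigmax_leP; split; first exact: leNye.
  move=> k _; have Hyk : V i k != -oo -> y k <= (x' i)%:E - V i k.
    by move=> Hk; apply: bigmin_le_cond.
  move: Hyk (HV i k); case: (V i k) => [v| |] //=; last by rewrite leNye.
  move=> /(_ isT); rewrite /embv.
  case: (y k) => [c| |] h _.
  - have h' : (c <= x' i - v)%R := h.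
    suff : (v + c <= x' i)%R by []. lra.
  - by move: h; rewrite -EFinB leNgt ltry.
  - by rewrite addeNy leNye.
Qed.

Lemma keyB (b : 'I_n -> R) (r : R) : (0 <= r)%R ->
  hball b r%:E `<=` colspan V ->
  forall i, T (embv (fun j => - b j)%R) i <= (- b i - r)%:E.
Proof.
move=> r0 Hb i.
pose x' j := (b j + (if j == i then r else 0))%R.
have : colspan V (embv x').
  apply: Hb; split; first by move=> j.
  apply: hd_ge => // j l; rewrite /x'; case: (j == i); case: (l == i); lra.
move=> [y [Hy Exy]].
have Hi : embv x' i = tmulv V y i by rewrite Exy.
have [k1 _] := Hrow i.
have [k0 _ Hk0] := @argmax_ex _ _ _ predT (fun k => V i k + y k) k1 isT.
have Emax : tmulv V y i = V i k0 + y k0.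
  apply/eqP; rewrite eq_le; apply/andP; split.
    apply/bigmax_leP; split; [exact: leNye| move=> k _; exact: Hk0].
  exact: (@bigmax_sup _ _ _ _ k0).
move: Hi; rewrite Emax /embv /x' eqxx.
move: (HV i k0) (Hy k0); case Hv: (V i k0) => [v||] // _; case Hyk: (y k0) => [c||] // _.
move=> [] Ebc.
apply: le_trans (T_le (k:=k0) _ _) _; first by rewrite Hv.
apply/(Fk_leP _ _ Hv) => j Hj.
have Hj' : V j k0 + y k0 <= embv x' j.
  rewrite Exy; exact: (@bigmax_sup _ _ _ _ k0).
move: Hj'; rewrite /embv /x' (negbTE Hj) Hyk.
move: (HV j k0); case: (V j k0) => [w| |] //= _ h; last by rewrite leNye.
have h' : (w + c <= b j + 0)%R := h.
suff : (w + - b j <= - b i - r + v)%R by []. lra.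
Qed.

Definition cwset : set R :=
  [set l : R | exists a : 'I_n -> R, forall i, T (embv a) i <= (l + a i)%:E].
Definition cwE := ereal_inf (EFin @` cwset).

Lemma cw_up (l l' : R) : cwset l -> (l <= l')%R -> cwset l'.
Proof.
move=> [a Ha] Hll; exists a => i; apply: le_trans (Ha i) _; rewrite lee_fin; lra.
Qed.

Lemma cw0 : cwset 0%R.
Proof.
have [ki Hki] : {ki : 'I_n -> 'I_p & forall i k, V i k <= V i (ki i)}.
  apply: (@choice _ _ (fun i k => forall k', V i k' <= V i k)) => i; have [k1 Hk1] := Hrow i.
  have [k0 _ H] := @argmax_ex _ _ _ predT (V i) k1 isT.
  by exists k0 => k; apply: H.
have Hfin : forall i, V i (ki i) \is a fin_num.
  move=> i; rewrite fin_numE HV andbT; have [k1 Hk1] := Hrow i.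
  by move: (Hki i k1) Hk1; case: (V i (ki i)) => //; rewrite leeNy_eq => ->.
exists (fun i => - fine (V i (ki i)))%R => i.
have Hv : V i (ki i) = (fine (V i (ki i)))%:E by rewrite fineK.
apply: le_trans (T_le _ (k := ki i) _) _; first by rewrite Hv.
apply/(Fk_leP _ _ Hv) => j Hj; rewrite /embv.
move: (Hki j (ki i)); rewrite -(fineK (Hfin j)).
move: (HV j (ki i)); case: (V j (ki i)) => [w| |] //= _; rewrite ?leNye //.
rewrite lee_fin => h.
suff : (w + - fine (V j (ki j)) <= 0 + - fine (V i (ki i)) + fine (V i (ki i)))%R by [].
lra.
Qed.

Lemma rho_le_cw (l : R) : cwset l -> rho T <= l%:E.
Proof.
move=> [a Ha]; apply/ereal_supP => e [He [u [Hu [Hnb HTu]]]].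
have [i1 Hi1] : exists i, u i != -oo.
  apply: contra_notP Hnb => H; apply: funext => i; apply/eqP.
  by apply: contra_notP H => Hi; exists i; apply/negP.
have [i0 Hi0 Hmax] := @argmax_ex _ _ _ (fun i => u i != -oo)
   (fun i => fine (u i) - a i)%R i1 Hi1.
set c := (fine (u i0) - a i0)%R.
have Hle : forall j, u j <= (fun j => c%:E + embv a j) j.
  move=> j; have [/eqP ->|Hj] := boolP (u j == -oo); first exact: leNye.
  have := Hmax j Hj; move: (Hu j) Hj; case: (u j) => [uj| |] //= _ _ h.
  rewrite /embv -EFinD lee_fin /c; simpl in h; lra.
have := T_mono i0 Hle; rewrite T_shift HTu /=.
have Hu0 : u i0 = (c + a i0)%:E.
  move: (Hu i0) Hi0; rewrite /c; case: (u i0) => [uu| |] //= _ _; congr EFin; lra.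
rewrite Hu0.
move=> h; have h2 : e + (c + a i0)%:E <= (c + (l + a i0))%:E.
  apply: le_trans h _; rewrite (EFinD c (l + a i0)); apply: leeD2l; exact: Ha.
clear HTu h; move: He h2; case: e => [ee| |] //= _; rewrite ?leNye //.
move=> h3; have h4 : (ee + (c + a i0) <= c + (l + a i0))%R := h3.
rewrite lee_fin; lra.
Qed.

Lemma rho_le_cwE : rho T <= cwE.
Proof. apply/ereal_infP => _ [l Hl <-]; exact: rho_le_cw. Qed.

Lemma eig_le_rho (l : R) (u : 'I_n -> \bar R) :
  (forall i, u i != +oo) -> u <> @botv R n -> T u = (fun i => l%:E + u i) ->
  l%:E <= rho T.
Proof.
move=> Hu Hnb HTu; apply: ereal_sup_ubound; split => //; by exists u.
Qed.

Definition Epol (s : {ffun 'I_n -> 'I_p}) i j := (j != i) && (V j (s i) != -oo).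
Definition wpol (s : {ffun 'I_n -> 'I_p}) i j := (fine (V j (s i)) - fine (V i (s i)))%R.
Definition valid (s : {ffun 'I_n -> 'I_p}) := forall i, V i (s i) != -oo.

Lemma finV i k : V i k != -oo -> V i k = (fine (V i k))%:E.
Proof. by move=> h; rewrite fineK // fin_numE h HV. Qed.

Lemma pol_of_T (l : R) a : (forall i, T (embv a) i <= (l + a i)%:E) ->
  exists s, valid s /\ forall i j, Epol s i j -> (wpol s i j - l + a j <= a i)%R.
Proof.
move=> Ha.
have [kf Hkf] : {kf : 'I_n -> 'I_p & forall i, V i (kf i) != -oo /\ T (embv a) i = Fk (embv a) i (kf i)}.
  apply: (@choice _ _ (fun i k => V i k != -oo /\ T (embv a) i = Fk (embv a) i k)) => i.
  by have [k Hk E] := T_att (embv a) i; exists k.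
exists [ffun i => kf i]; split.
  by move=> i; rewrite ffunE; case: (Hkf i).
move=> i j /andP [Hji HVj]; rewrite /wpol; move: HVj; rewrite !ffunE => HVj.
have [Hk E] := Hkf i.
have := Ha i; rewrite E => /(Fk_leP _ _ (finV Hk)) /(_ j Hji).
rewrite (finV HVj) /embv.
set v := fine (V i (kf i)); set u := fine (V j (kf i)).
move=> h; have h' : (u + a j <= l + a i + v)%R := h; simpl; lra.
Qed.

Lemma T_of_pol s (l : R) a : valid s ->
  (forall i j, Epol s i j -> (wpol s i j - l + a j <= a i)%R) ->
  forall i, T (embv a) i <= (l + a i)%:E.
Proof.
move=> Hs H i.
apply: le_trans (T_le _ (Hs i)) _.
apply/(Fk_leP _ _ (finV (Hs i))) => j Hji.
have [HVj|HVj] := eqVneq (V j (s i)) (-oo); first by rewrite HVj leNye.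
rewrite (finV HVj) /embv.
have := H i j (ltac:(by rewrite /Epol Hji HVj)); rewrite /wpol.
set v := fine (V i (s i)); set u := fine (V j (s i)).
move=> h; suff : (u + a j <= l + a i + v)%R by []. lra.
Qed.

Lemma cw_att (l : R) : cwE = l%:E -> cwset l.
Proof.
move=> Hcw.
have Happ : forall eps : R, (0 < eps)%R -> exists s, valid s /\ exists a : 'I_n -> R,
    forall i j, Epol s i j -> (wpol s i j - l + a j <= eps + a i)%R.
  move=> eps Heps.
  have : cwE < (l + eps)%:E by rewrite Hcw lte_fin; lra.
  move=> /ereal_inf_lt [_ [l' Hl' <-]]; rewrite lte_fin => Hll.
  have [a Ha] := cw_up Hl' (ltW Hll).
  have [s [Hs Hs2]] := pol_of_T Ha.
  exists s; split => //; exists a => i j E; have := Hs2 i j E; lra.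
have Hmon : forall (s0 : {ffun 'I_n -> 'I_p}) (e e' : R), (0 < e)%R -> (e <= e')%R ->
    (valid s0 /\ exists a : 'I_n -> R, forall i j, Epol s0 i j -> (wpol s0 i j - l + a j <= e + a i)%R) ->
    (valid s0 /\ exists a : 'I_n -> R, forall i j, Epol s0 i j -> (wpol s0 i j - l + a j <= e' + a i)%R).
  move=> s0 e e' He Hee [Hv [a Ha]]; split => //; exists a => i j E.
  have := Ha i j E; lra.
have [s Hs] := @pigeon_eps _ {ffun 'I_n -> 'I_p} (fun s e => valid s /\ exists a : 'I_n -> R,
    forall i j, Epol s i j -> (wpol s i j - l + a j <= e + a i)%R) Hmon Happ.
have Hv : valid s by case: (Hs 1%R ltr01).
have Hlin : forall eps : R, (0 < eps)%R -> exists a : 'I_n -> R, forall i j,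
    i \in [set: 'I_n]%SET -> j \in [set: 'I_n]%SET -> Epol s i j -> (wpol s i j - l + a j <= eps + a i)%R.
  move=> eps Heps; have [_ [a Ha]] := Hs eps Heps; exists a => i j _ _ E; exact: Ha.
have [a Ha] := @lin_att R n _ [set: 'I_n]%SET (Epol s) (fun i j => wpol s i j - l)%R erefl Hlin.
exists a; apply: (T_of_pol Hv) => i j E; apply: Ha => //; by rewrite inE.
Qed.

Lemma ext_fin (y : 'I_n -> \bar R) (mu : R) (h : 'I_n -> nat) :
  (forall i, y i != +oo) -> (forall i, T y i <= mu%:E + y i) ->
  (forall i, y i = -oo -> exists2 k, V i k != -oo &
      forall j, j != i -> V j k != -oo -> y j = -oo /\ (h j < h i)%N) ->
  cwset mu.
Proof.
move=> Hy HT Hlev.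
have [kf Hkf] : {kf : 'I_n -> 'I_p & forall i, V i (kf i) != -oo /\
   (y i != -oo -> Fk y i (kf i) <= mu%:E + y i) /\
   (y i = -oo -> forall j, j != i -> V j (kf i) != -oo -> y j = -oo /\ (h j < h i)%N)}.
  apply: (@choice _ _ (fun i k => V i k != -oo /\ (y i != -oo -> Fk y i k <= mu%:E + y i) /\
     (y i = -oo -> forall j, j != i -> V j k != -oo -> y j = -oo /\ (h j < h i)%N))) => i.
  have [Hi|Hi] := eqVneq (y i) (-oo).
    have [k Hk H] := Hlev i Hi; exists k; split => //; split => //; by rewrite Hi.
  have [k Hk E] := T_att y i; exists k; split => //; split; first by rewrite -E.
  by move=> /eqP; rewrite (negbTE Hi).
pose q i j := (`|fine (V j (kf i)) - fine (V i (kf i)) - mu - fine (y i)|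
   + `|fine (V j (kf i)) - fine (V i (kf i)) - mu|)%R.
pose N := (\sum_(ij : 'I_n * 'I_n) q ij.1 ij.2)%R.
have Hq0 : forall i j, (0 <= q i j)%R by move=> i j; rewrite /q; apply: addr_ge0.
have HqN : forall i j, (q i j <= N)%R.
  move=> i j; rewrite /N (bigD1 (i, j)) //=.
  have : (0 <= \sum_(k | k != (i,j)) q k.1 k.2)%R by apply: sumr_ge0 => k _.
  lra.
have HN0 : (0 <= N)%R by apply: sumr_ge0 => k _.
pose H := (\max_i h i)%N.
pose b j := if y j is r%:E then r else (N * (h j)%:R - N * H%:R - N)%R.
have bfin : forall j, y j != -oo -> b j = fine (y j).
  by move=> j'; rewrite /b; move: (Hy j'); case: (y j').
have Hbneg : forall j, y j = -oo -> (b j <= - N)%R.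
  move=> j' Hj'; rewrite /b Hj'.
  have : (N * (h j')%:R <= N * H%:R)%R.
    by apply: ler_wpM2l => //; rewrite ler_nat; apply: leq_bigmax.
  lra.
exists b => i.
have [Hk [Hfin Hinf]] := Hkf i.
apply: le_trans (T_le _ Hk) _.
apply/(Fk_leP _ _ (finV Hk)) => j Hji; rewrite /embv.
have [HVj|HVj] := eqVneq (V j (kf i)) (-oo); first by rewrite HVj leNye.
have hq := HqN i j; rewrite /q in hq.
have h1 := ler_norm (fine (V j (kf i)) - fine (V i (kf i)) - mu - fine (y i))%R.
have h2 := ler_norm (fine (V j (kf i)) - fine (V i (kf i)) - mu)%R.
have hp1 := normr_ge0 (fine (V j (kf i)) - fine (V i (kf i)) - mu - fine (y i))%R.
have hp2 := normr_ge0 (fine (V j (kf i)) - fine (V i (kf i)) - mu)%R.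
have [Hyi|Hyi] := eqVneq (y i) (-oo).
- have [Hyj Hh] := Hinf Hyi j Hji HVj.
  have Hb : (b j <= b i - N)%R.
    rewrite /b Hyi Hyj.
    have : (N * (h j)%:R + N <= N * (h i)%:R)%R.
      rewrite -[X in (_ + X)%R]mulr1 -mulrDr; apply: ler_wpM2l => //.
      by rewrite natr1 ler_nat.
    lra.
  rewrite (finV HVj).
  suff : (fine (V j (kf i)) + b j <= mu + b i + fine (V i (kf i)))%R by [].
  lra.
- have Hyi' : y i = (fine (y i))%:E by rewrite fineK // fin_numE Hyi Hy.
  have := Hfin Hyi => /(Fk_leP _ _ (finV Hk)) /(_ j Hji).
  rewrite (bfin i Hyi).
  have [Hyj|Hyj] := eqVneq (y j) (-oo).
  + move=> _; have hb := Hbneg j Hyj.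
    rewrite (finV HVj).
    suff : (fine (V j (kf i)) + b j <= mu + fine (y i) + fine (V i (kf i)))%R by [].
    lra.
  + have Hyj' : y j = (fine (y j))%:E by rewrite fineK // fin_numE Hyj Hy.
    rewrite (bfin j Hyj) {1}(finV HVj) Hyj' {1}Hyi' => hle.
    have hle' : (fine (V j (kf i)) + fine (y j) <= mu + fine (y i) + fine (V i (kf i)))%R := hle.
    rewrite (finV HVj).
    suff : (fine (V j (kf i)) + fine (y j) <= mu + fine (y i) + fine (V i (kf i)))%R by [].
    lra.
Qed.

Lemma ehelp2 (X Y : \bar R) (r c : R) : X != +oo -> X <= (c + r)%:E + Y -> X - r%:E <= Y + c%:E.
Proof.
case: X => [x| |] //= _; rewrite ?leNye //.
case: Y => [y| |] //=; try by rewrite leey.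
2: by move=> _; rewrite addye // leey.
move=> h; have h' : (x <= c + r + y)%R := h; suff : (x - r <= y + c)%R by []. lra.
Qed.

Section Iter.
Variable l : R.
Variable a0 : 'I_n -> R.
Hypothesis Ha0 : forall i, T (embv a0) i <= (l + a0 i)%:E.
Hypothesis Hmin : forall l', cwset l' -> (l <= l')%R.

Definition stepT (x : 'I_n -> \bar R) := fun i => T x i - l%:E.
Definition xs (k : nat) := iter k stepT (embv a0).

Lemma xsS k : xs k.+1 = stepT (xs k).
Proof. by []. Qed.

Lemma xs_neqy k i : xs k i != +oo.
Proof.
elim: k i => [|k IH] i //; rewrite xsS /stepT.
by move: (T_neqy i IH); case: (T (xs k) i).
Qed.

Lemma T_xs k i : T (xs k) i = l%:E + xs k.+1 i.
Proof. by rewrite xsS /stepT addeC subeK. Qed.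

Lemma xs_dec k i : xs k.+1 i <= xs k i.
Proof.
elim: k i => [|k IH] i.
  rewrite xsS /stepT leeBlDr //.
  change (T (embv a0) i <= (a0 i)%:E + l%:E); rewrite addeC -EFinD; exact: Ha0.
change (stepT (xs k.+1) i <= stepT (xs k) i); rewrite /stepT.
apply: leeD2r; apply: T_mono; exact: IH.
Qed.

Lemma xs_mono k k' i : (k <= k')%N -> xs k' i <= xs k i.
Proof.
move/subnK <-; elim: (k' - k)%N => [|d IH] /=; first exact: lexx.
apply: le_trans IH; exact: xs_dec.
Qed.

Definition wlim i := ereal_inf (range (fun k => xs k i)).

Lemma w_le k i : wlim i <= xs k i.
Proof. apply: ereal_inf_lbound; by exists k. Qed.

Lemma w_neqy i : wlim i != +oo.
Proof. by move: (w_le 0 i); rewrite /= /embv; case: (wlim i). Qed.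

Lemma cont (i : 'I_n) (c : R) : T wlim i < c%:E -> exists M, T (xs M) i < c%:E.
Proof.
have [k Hk ->] := T_att wlim i.
have Hv := finV Hk; set v := fine (V i k) in Hv.
rewrite /Fk Hv addeC lteBlDr // => /bigmax_ltP [_ Hlt].
have Hm : forall j, exists m, j != i -> V j k + xs m j < c%:E + v%:E.
  move=> j; have [Eji|Nji] := eqVneq j i; first by exists 0%N.
  have := Hlt j Nji; have [HVj|HVj] := eqVneq (V j k) (-oo).
    by move=> _; exists 0%N => _; rewrite HVj addNye; change (-oo < (c + v)%:E); exact: ltNyr.
  rewrite (finV HVj); set u := fine (V j k).
  rewrite addeC -lteBrDr // => /ereal_inf_lt [_ [m _ <-] Hm].
  by exists m => _; rewrite addeC -lteBrDr.
have [mf Hmf] := choice Hm.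
exists (\max_j mf j)%N.
apply: le_lt_trans (T_le _ Hk) _.
rewrite /Fk Hv addeC lteBlDr //; apply/bigmax_ltP; split; first by change (-oo < (c + v)%:E); exact: ltNyr.
move=> j Hj; apply: le_lt_trans (Hmf j Hj); apply: leeD2l; apply: xs_mono; exact: leq_bigmax.
Qed.

Lemma T_w i : T wlim i = l%:E + wlim i.
Proof.
apply/eqP; rewrite eq_le; apply/andP; split.
  rewrite addeC -leeBlDr //; apply/ereal_infP => _ [k _ <-].
  apply: le_trans (xs_dec k i); rewrite xsS /stepT; apply: leeD2r; apply: T_mono => j; exact: w_le.
rewrite leNgt; apply/negP => Hlt.
have Hwi : wlim i != -oo.
  apply/negP => /eqP Ew; move: Hlt; rewrite Ew addeNy.
  by rewrite ltNge leNye.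
have [wr Ew] : exists wr, wlim i = wr%:E.
  by exists (fine (wlim i)); rewrite fineK // fin_numE Hwi w_neqy.
move: Hlt; rewrite Ew -EFinD => /cont [M HM].
move: HM; rewrite T_xs => h2.
have h1 := w_le M.+1 i; rewrite Ew in h1.
have h3 : l%:E + wr%:E <= l%:E + xs M.+1 i by apply: leeD2l.
by move: (lt_le_trans h2 h3); rewrite ltxx.
Qed.

Lemma w_nbot : wlim <> @botv R n.
Proof.
move=> Hw.
have Hm : forall i, exists m, xs m i < (a0 i - 1)%:E.
  move=> i; have : wlim i < (a0 i - 1)%:E by rewrite Hw /botv ltNyr.
  by move/ereal_inf_lt => [_ [m _ <-] H]; exists m.
have [mf Hmf] := choice Hm.
pose M := (\max_i mf i).+1.
have HM : forall i, xs M i <= (a0 i - 1)%:E.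
  move=> i; apply/ltW; apply: le_lt_trans (Hmf i); apply: xs_mono.
  by rewrite /M; apply: leqW; apply: leq_bigmax.
pose d : R := (1 / M%:R)%R.
have HM1 : ((M.-1)%:R + 1 = M%:R :> R)%R by rewrite natr1.
have Md : (M%:R * d = 1)%R by rewrite /d mul1r mulfV // pnatr_eq0.
have d0 : (0 < d)%R by rewrite /d divr_gt0 // ltr0n.
have Md1 : ((M.-1)%:R * d = 1 - d)%R.
  have : ((M.-1)%:R * d + d = M%:R * d)%R by rewrite -HM1 mulrDl mul1r.
  lra.
pose mu := (l - d)%R.
pose b i := \big[mine/+oo]_(m < M) (xs m i + (m%:R * d)%:E).
have Hb_le : forall i (m : 'I_M), b i <= xs m i + (m%:R * d)%:E.
  by move=> i m; exact: bigmin_le.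
have Hb_neqy : forall i, b i != +oo.
  move=> i; have := Hb_le i ord0; rewrite /= mul0r adde0 => h.
  by apply/negP => /eqP E; move: h; rewrite E leNgt /embv ltry.
have pre : forall i (m : nat), (m < M)%N -> T b i <= (m%:R * d)%:E + (l%:E + xs m.+1 i).
  move=> i m Hm'.
  have Hle : forall j, b j <= (fun j => (m%:R * d)%:E + xs m j) j.
    by move=> j; rewrite addeC; exact: (Hb_le j (Ordinal Hm')).
  by have := T_mono i Hle; rewrite T_shift T_xs.
have HTb : forall i, T b i <= mu%:E + b i.
  move=> i; rewrite addeC -leeBlDr //.
  apply/bigmin_geP; split; first exact: leey.
  move=> m _; apply: ehelp2; first exact: T_neqy.
  case Em: (nat_of_ord m) => [|m1].
  - have h1 := HM i.
    move: (pre i M.-1 (ltac:(by rewrite /M))).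
    rewrite (_ : M.-1.+1 = M) // => h2.
    have h3 : T b i <= ((M.-1)%:R * d + (l + (a0 i - 1)))%:E.
      apply: le_trans h2 _; rewrite EFinD; apply: leeD2l; rewrite EFinD; apply: leeD2l; exact: h1.
    apply: le_trans h3 _; rewrite /= /embv.
    suff : ((M.-1)%:R * d + (l + (a0 i - 1)) <= 0%:R * d + mu + a0 i)%R by [].
    rewrite mul0r /mu; lra.
  - have Hm1 : (m1 < M)%N by rewrite -ltnS -Em ltnS ltnW.
    apply: le_trans (pre i m1 Hm1) _.
    rewrite addeA; apply: leeD2r.
    have Hs : ((m1.+1)%:R * d = m1%:R * d + d)%R by rewrite -natr1 mulrDl mul1r.
    suff : (m1%:R * d + l <= m1.+1%:R * d + mu)%R by [].
    rewrite /mu; lra.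
pose h i := find (fun m => xs m i == -oo) (iota 0 M).
have Hlev : forall i, b i = -oo -> exists2 k, V i k != -oo &
    forall j, j != i -> V j k != -oo -> b j = -oo /\ (h j < h i)%N.
  move=> i Hbi.
  have Hhas : has (fun m => xs m i == -oo) (iota 0 M).
    apply/negPn/negP => /hasPn Hn.
    have : b i != -oo; last by rewrite Hbi.
    rewrite /b; elim/big_ind: _ => //.
      by move=> x y Hx Hy; rewrite minElt; case: ifP.
    move=> m _; have := Hn m (ltac:(by rewrite mem_iota /= add0n ltn_ord)).
    by case: (xs m i).
  have Hh : (h i < M)%N by rewrite -[X in (_ < X)%N](size_iota 0 M) -has_find.
  have Hxh : xs (h i) i = -oo.
    by have := nth_find 0%N Hhas; rewrite nth_iota // add0n => /eqP.
  move: Hxh Hh; case Ehi : (h i) => [|m1] Hxh Hh.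
    by move: Hxh; rewrite /= /embv.
  have HT : T (xs m1) i = -oo by rewrite T_xs Hxh addeNy.
  have [k Hk Ek] := T_att (xs m1) i.
  exists k => // j Hji HVj.
  have HB : \big[maxe/-oo]_(j0 < n | j0 != i) (V j0 k + xs m1 j0) = -oo.
    move: HT; rewrite Ek /Fk (finV Hk) => /eqP; rewrite adde_eq_ninfty.
    by case/orP => // /eqP.
  have Hxj : xs m1 j = -oo.
    have : V j k + xs m1 j <= -oo.
      by rewrite -HB; apply: (@bigmax_sup _ _ _ _ j) => //.
    by rewrite leeNy_eq adde_eq_ninfty (negbTE HVj) /= => /eqP.
  have Hm1 : (m1 < M)%N by rewrite ltnW.
  split.
    apply/eqP; rewrite -leeNy_eq; apply: le_trans (Hb_le j (Ordinal Hm1)) _.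
    by rewrite /= Hxj addNye.
  rewrite ltnS leqNgt; apply/negP => Hlt.
  have := before_find 0%N Hlt; rewrite nth_iota // add0n Hxj eqxx //.
have Hcw := @ext_fin b mu h Hb_neqy HTb Hlev.
have := Hmin Hcw; rewrite /mu; lra.
Qed.

End Iter.

Lemma cwE_le0 : cwE <= 0.
Proof. apply: ereal_inf_lbound; exists 0%R => //; exact: cw0. Qed.

Lemma rho_ge_cwE : cwE <= rho T.
Proof.
case Ecw: cwE => [l| |].
- have [a0 Ha0] := cw_att Ecw.
  have Hmin : forall l', cwset l' -> (l <= l')%R.
    move=> l' H'; rewrite -lee_fin -Ecw; apply: ereal_inf_lbound; by exists l'.
  apply: (@eig_le_rho l (wlim l a0)).
  + move=> i; exact: w_neqy.
  + exact: w_nbot Ha0 Hmin.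
  + apply: funext => i; exact: T_w Ha0 i.
- by have := cwE_le0; rewrite Ecw.
- exact: leNye.
Qed.

Lemma rho_eq : rho T = cwE.
Proof. by apply/eqP; rewrite eq_le rho_le_cwE rho_ge_cwE. Qed.

Lemma ge_all_real (x : \bar R) : (forall s : R, (0 <= s)%R -> s%:E <= x) -> x = +oo.
Proof.
case: x => [r| |] // H.
- have h0 : (0 <= Num.norm r)%R by apply: normr_ge0.
  have h1 : (r <= Num.norm r)%R by apply: ler_norm.
  have h2 : (0 <= Num.norm r + 1)%R by lra.
  have := H _ h2.
  rewrite lee_fin => h3; exfalso; lra.
- by have := H 0%R (lexx _).
Qed.

Lemma inrad_eq : inrad_col V = - cwE.
Proof.
apply/eqP; rewrite eq_le; apply/andP; split.
- apply/ereal_supP => r [r0 [b Hb]].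
  case: r r0 Hb => [r| |] r0 Hb.
  + rewrite leeNr; apply: ereal_inf_lbound; exists (- r)%R => //.
    exists (fun i => - b i)%R => i; apply: le_trans (keyB _ Hb i) _.
      by rewrite -lee_fin.
    by rewrite lee_fin; lra.
  + suff -> : cwE = -oo by [].
    case Ec : cwE => [c| |] //.
    * have : cwset (c - 1)%R.
        have Hb' : hball b (1 - c)%:E `<=` colspan V.
          move=> x [Hx _]; apply: Hb; split => //; exact: leey.
        have Hc0 : (c <= 0)%R by rewrite -lee_fin -Ec cwE_le0.
        exists (fun i => - b i)%R => i; apply: le_trans (keyB _ Hb' i) _.
          lra.
        rewrite lee_fin; lra.
      move=> Hc; have : cwE <= (c - 1)%:E.
        apply: ereal_inf_lbound; by exists (c - 1)%R.
      rewrite Ec lee_fin => h.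
      have h' : (c - 1 < c)%R by rewrite ltrBlDr ltrDl ltr01.
      by move: (lt_le_trans h' h); rewrite ltxx.
    * by have := cwE_le0; rewrite Ec.
  + by move: r0; rewrite leNgt ltNyr.
- case Ec : cwE => [c| |].
  + have Hc0 : (c <= 0)%R by rewrite -lee_fin -Ec cwE_le0.
    have [a Ha] := cw_att Ec.
    apply: ereal_sup_ubound; split; first by rewrite /= lee_fin; lra.
    have HT : forall i, T (embv a) i <= (a i - - c)%:E.
      by move=> i; apply: le_trans (Ha i) _; rewrite lee_fin; lra.
    exists (fun i => - a i)%R => x Hx.
    by have [] := @keyA a (- c)%R (ltac:(lra)) HT x Hx.
  + by have := cwE_le0; rewrite Ec.
  + rewrite /= (ge_all_real (x := inrad_col V)) ?leey //.
    move=> s s0; apply: ereal_sup_ubound; split; first by rewrite lee_fin.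
    have : cwE < (- s)%:E by rewrite Ec ltNyr.
    move=> /ereal_inf_lt [_ [l' Hl' <-]]; rewrite lte_fin => Hl's.
    have [a Ha] := cw_up Hl' (ltW Hl's).
    have HT : forall i, T (embv a) i <= (a i - s)%:E.
      by move=> i; apply: le_trans (Ha i) _; rewrite lee_fin; lra.
    exists (fun i => - a i)%R => x Hx.
    by have [] := @keyA a s s0 HT x Hx.
Qed.

Lemma main_all :
  rho (T_op V) <= 0 /\
  - rho (T_op V) = inrad_col V /\
  (rho (T_op V) \is a fin_num ->
   forall a : 'I_n -> R,
     (forall i, T_op V (embv a) i <= rho (T_op V) + (a i)%:E) ->
     hball (fun i => - a i)%R (- rho (T_op V)) `<=` colspan V `&` @fin_vecs R n /\
     (forall (b : 'I_n -> R) (r : \bar R), 0 <= r ->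
        hball b r `<=` colspan V -> r <= - rho (T_op V))).
Proof.
rewrite rho_eq inrad_eq; split; first exact: cwE_le0.
split => // Hfin a Ha; split.
  move: Hfin Ha; case Ec : cwE => [c| |] // _ Ha.
  have Hc0 : (c <= 0)%R by rewrite -lee_fin -Ec cwE_le0.
  apply: (@keyA a (- c)%R (ltac:(lra))).
  move=> i; apply: le_trans (Ha i) _; rewrite lee_fin; lra.
move=> b r r0 Hb; rewrite -inrad_eq; apply: ereal_sup_ubound; split => //; by exists b.
Qed.
End Main.

Unset Implicit Arguments.

Theorem theorem3p3 (R : realType) (n p : nat) (V : 'I_n -> 'I_p -> \bar R)
  (HV : forall i k, V i k != +oo)
  (Hrow : forall i, exists k, V i k != -oo)
  (Hcol : forall k, exists i, V i k != -oo) :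
  rho (T_op V) <= 0 /\
  - rho (T_op V) = inrad_col V /\
  (rho (T_op V) \is a fin_num ->
   forall a : 'I_n -> R,
     (forall i, T_op V (embv a) i <= rho (T_op V) + (a i)%:E) ->
     hball (fun i => - a i)%R (- rho (T_op V)) `<=` colspan V `&` @fin_vecs R n /\
     (forall (b : 'I_n -> R) (r : \bar R), 0 <= r ->
        hball b r `<=` colspan V -> r <= - rho (T_op V))).
Proof.
exact: (main_all HV Hrow Hcol).
Qed.
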